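(* Let $G$ be a graph and $x_0$ a vertex of degree two in $G$ with two distinct neighbors $x_1,x_2$, and let $J'=G/x_0$. If $J'$ has an osculating bicycle $(Q,Q')$ such that neither $Q$ nor $Q'$ is a cycle of $G$, then (the edges of) $Q\cup Q'$ form an $x_0$-isolating even cycle of $G$.
   Context: Graphs are loopless; multiple edges allowed (a pair of parallel edges forms a cycle of length two). $G/x_0$ (bicontraction of $x_0$) is the graph obtained from $G$ by contracting the two edges $x_0x_1$ and $x_0x_2$ into a single vertex; every other edge of $G$ is identified with the corresponding edge of $G/x_0$ (parallel edges may arise). An osculating bicycle is a pair of cycles $(Q,Q')$ that have exactly one vertex in common and whose lengths have the same parity. For a vertex $v$ of $G$, a cycle $C$ of $G-v$ is $v$-isolating if $v$ is an isolated vertex of $G-V(C)$. *)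

(* Defs.v *)
(* Finite loopless multigraphs given by a vertex finType V,
   an edge finType E, and endpoint maps src tgt : E -> V. *)
From mathcomp Require Import all_boot.
Set Implicit Arguments. Unset Strict Implicit. Unset Printing Implicit Defensive.

Section Graphs.
Variables (V E : finType) (src tgt : E -> V).

Definition joins (e : E) (u v : V) : bool :=
  ((src e == u) && (tgt e == v)) || ((src e == v) && (tgt e == u)).

Definition incident (e : E) (v : V) : bool := (src e == v) || (tgt e == v).

(* C is (the edge set of) a cycle in the graph with edge set A (and
   endpoint maps src tgt): there are distinct vertices v_0..v_{k-1} and
   distinct edges e_0..e_{k-1} of A, k >= 2, with e_i joining v_i and
   v_{i+1 mod k}.  (k = 2 means two parallel edges.) *)
Definition is_cycle (A : {set E}) (C : {set E}) : Prop :=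
  exists (vs : seq V) (es : seq E),
    [/\ 2 <= size es, size vs = size es, uniq vs & uniq es] /\
    [/\ {subset es <= A}, C = [set e in es] &
        all (fun p => joins p.1 p.2.1 p.2.2) (zip es (zip vs (rot 1 vs)))].

Definition cverts (C : {set E}) : {set V} :=
  [set v | [exists e in C, incident e v]].

Definition del_vertex_edges (v : V) : {set E} := [set e | ~~ incident e v].

(* degree (loopless graph: each incident edge counted once) *)
Definition degree (v : V) : nat := #|[set e | incident e v]|.

(* C is a v-isolating cycle: a cycle of G - v with v isolated in G - V(C) *)
Definition isolating_cycle (v : V) (C : {set E}) : Prop :=
  is_cycle (del_vertex_edges v) C /\
  (forall e, (src e == v -> tgt e \in cverts C) /\ (tgt e == v -> src e \in cverts C)).

End Graphs.

(* Bicontraction G/x0 (x0 of degree 2 with neighbours x1, x2): x0, x1, x2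
   are merged into the single vertex x1; the other edges keep their identity.
   Vertices x0, x2 remain as isolated vertices of the vertex type (harmless:
   cycles only involve endpoints of their edges).  Edges that would become
   loops (edges joining x1 and x2) are removed, graphs being loopless. *)
Section Bicontraction.
Variables (V E : finType) (src tgt : E -> V) (x0 x1 x2 : V).

Definition bc_map (v : V) : V := if (v == x0) || (v == x2) then x1 else v.
Definition bc_src (e : E) : V := bc_map (src e).
Definition bc_tgt (e : E) : V := bc_map (tgt e).
Definition bc_edges : {set E} :=
  [set e | ~~ incident src tgt e x0 & bc_src e != bc_tgt e].

End Bicontraction.

Definition osculating_bicycle (V E : finType) (s t : E -> V) (A : {set E})
  (Q Q' : {set E}) : Prop :=
  [/\ is_cycle s t A Q, is_cycle s t A Q',
      #|cverts s t Q :&: cverts s t Q'| = 1 & odd #|Q| = odd #|Q'|].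

(* Main.v *)
Require Import Defs.
From mathcomp Require Import all_boot.
Set Implicit Arguments. Unset Strict Implicit. Unset Printing Implicit Defensive.

Section Gen.
Variables (V E : finType).
Implicit Types (s t : E -> V).

Fixpoint pth s t (u : V) (l : seq (E * V)) (w : V) : bool :=
  if l is p :: l' then joins s t p.1 u p.2 && pth s t p.2 l' w else u == w.

Lemma joinsC s t e u v : joins s t e u v = joins s t e v u.
Proof. by rewrite /joins orbC. Qed.

Lemma joins_inc_l s t e u v : joins s t e u v -> incident s t e u.
Proof. by rewrite /joins /incident => /orP [/andP [-> _]|/andP [_ ->]]; rewrite ?orbT. Qed.

Lemma joins_inc_r s t e u v : joins s t e u v -> incident s t e v.
Proof. by rewrite joinsC; apply: joins_inc_l. Qed.

Lemma map_snd_zip (s1 : seq E) (s2 : seq V) : size s2 <= size s1 -> map snd (zip s1 s2) = s2.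
Proof. exact: unzip2_zip. Qed.

Lemma map_fst_zip (s1 : seq E) (s2 : seq V) : size s1 <= size s2 -> map fst (zip s1 s2) = s1.
Proof. exact: unzip1_zip. Qed.

Lemma pthE s t u es ws w : size es = size ws ->
  pth s t u (zip es ws) w =
  all (fun p => joins s t p.1 p.2.1 p.2.2) (zip es (zip (belast u ws) ws)) && (last u ws == w).
Proof.
elim: es u ws => [|e es IH] u [|x ws] //= [h].
by rewrite IH // andbA.
Qed.

Lemma pth_cat s t u l1 l2 w : pth s t u (l1 ++ l2) w =
  pth s t u l1 (last u (map snd l1)) && pth s t (last u (map snd l1)) l2 w.
Proof.
elim: l1 u => [|p l1 IH] u /=; first by rewrite eqxx.
by rewrite IH andbA.
Qed.

Lemma pth_last s t u l w : pth s t u l w -> last u (map snd l) = w.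
Proof. by elim: l u => [|p l IH] u /=; [move/eqP | case/andP => _ /IH]. Qed.

Lemma pth_cyc_mem s t u l : pth s t u l u -> 0 < size l -> u \in map snd l.
Proof. move=> /pth_last; case: l => [|r l] //= <- _. exact: mem_last. Qed.

Lemma pth_split (u : V) (l : seq (E * V)) v : v \in map snd l ->
  exists l1 l2, l = l1 ++ l2 /\ last u (map snd l1) = v.
Proof.
elim: l u => [|p l IH] u //=.
rewrite inE; case: eqP => [-> _| _ h].
  by exists [:: p], l.
have [l1 [l2 [-> h2]]] := IH p.2 h.
by exists (p :: l1), l2.
Qed.

Lemma pth_rev s t u l w : pth s t u l w -> exists lR,
  [/\ pth s t w lR u, map fst lR = rev (map fst l) & w :: map snd lR = rev (u :: map snd l)].
Proof.
elim: l u => [|p l IH] u /=.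
  by move/eqP => ->; exists [::]; split => //=; rewrite eqxx.
case/andP => hj /IH [lR [h1 h2 h3]].
exists (rcons lR (p.1, u)); split.
- by rewrite -cats1 pth_cat (pth_last h1) h1 /= eqxx andbT joinsC.
- by rewrite map_rcons h2 rev_cons.
- by rewrite map_rcons -rcons_cons h3 [RHS]rev_cons.
Qed.

Lemma pth_inc s t u l w v : pth s t u l w -> v \in map snd l ->
  exists2 e, e \in map fst l & incident s t e v.
Proof.
elim: l u => [|p l IH] u //=.
case/andP => hj hp; rewrite inE => /orP [/eqP -> | /(IH _ hp) [e he hi]].
  by exists p.1; [rewrite inE eqxx | exact: joins_inc_r hj].
by exists e => //; rewrite inE he orbT.
Qed.

Lemma cycle_pth s t (A C : {set E}) : is_cycle s t A C -> exists u l,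
  [/\ pth s t u l u, 2 <= size l, uniq (map snd l) & uniq (map fst l)] /\
  ({subset map fst l <= A} /\ C = [set e in map fst l]).
Proof.
case=> vs [es [[hs hsz hu hue] [hA hC hall]]].
case: vs hsz hu hall => [|v0 vs'] hsz hu hall; first by rewrite -hsz in hs.
exists v0, (zip es (rot 1 (v0 :: vs'))).
have hsz' : size es = size (rot 1 (v0 :: vs')) by rewrite size_rot.
split; first split.
- rewrite pthE // rot1_cons belast_rcons last_rcons eqxx andbT.
  by rewrite rot1_cons in hall.
- by rewrite size_zip -hsz' minnn.
- by rewrite map_snd_zip ?hsz' // rot_uniq.
- by rewrite map_fst_zip ?hsz'.
- by rewrite map_fst_zip ?hsz'.
Qed.

Lemma rot_belast (u : V) ws : last u ws = u -> rot 1 (belast u ws) = ws.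
Proof.
case/lastP: ws => [|ws z] //; rewrite last_rcons belast_rcons => ->.
by rewrite rot1_cons.
Qed.

Lemma pth_cycle s t (A C : {set E}) u l : pth s t u l u -> 2 <= size l -> uniq (map snd l) ->
  uniq (map fst l) -> {subset map fst l <= A} -> C = [set e in map fst l] ->
  is_cycle s t A C.
Proof.
move=> hp hs hu hue hA hC.
have hl : l = zip (map fst l) (map snd l) by symmetry; exact: zip_unzip.
have hlast := pth_last hp.
exists (belast u (map snd l)), (map fst l); split; split => //.
- by rewrite size_map.
- by rewrite size_belast !size_map.
- by rewrite -(rot_uniq 1) rot_belast.
- rewrite rot_belast //.
  by move: hp; rewrite {1}hl pthE ?size_map // => /andP [].
Qed.

Lemma cverts_of s t (C : {set E}) e v : e \in C -> incident s t e v -> v \in cverts s t C.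
Proof. by move=> he hi; rewrite inE; apply/existsP; exists e; rewrite he. Qed.

Lemma card_set_uniq (l : seq E) : uniq l -> #|[set e in l]| = size l.
Proof. by move=> hu; rewrite cardsE; apply/card_uniqP. Qed.

Lemma joins_other s t e u v : (forall e, s e != t e) -> joins s t e u v ->
  (s e = u -> t e = v) /\ (t e = u -> s e = v).
Proof.
move=> hl; rewrite /joins => /orP [/andP [/eqP h1 /eqP h2]|/andP [/eqP h1 /eqP h2]];
  split => // h; have := hl e.
- by rewrite h1 h eqxx.
- by rewrite h2 h eqxx.
Qed.

End Gen.

Section Bic.
Variables (V E : finType) (src tgt : E -> V) (x0 x1 x2 : V).
Hypothesis x12 : x1 != x2.
Local Notation s' := (bc_src src x0 x1 x2).
Local Notation t' := (bc_tgt tgt x0 x1 x2).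
Local Notation A' := (bc_edges src tgt x0 x1 x2).
Local Notation bm := (bc_map x0 x1 x2).

Lemma bm_eq w p : bm w = p -> p != x1 -> w = p.
Proof. by rewrite /bc_map; case: ifP => _ <- //; rewrite eqxx. Qed.

Lemma bm_x2 w : bm w != x2.
Proof. by rewrite /bc_map; case: ifP => [_|/norP [_ //]]. Qed.

Lemma joins'_G e u v : joins s' t' e u v -> u != x1 -> v != x1 -> joins src tgt e u v.
Proof.
rewrite /joins /bc_src /bc_tgt => /orP [/andP [/eqP H1 /eqP H2] | /andP[/eqP H1 /eqP H2]] hu hv.
- by rewrite (bm_eq H1 hu) (bm_eq H2 hv) !eqxx.
- by rewrite (bm_eq H1 hv) (bm_eq H2 hu) !eqxx orbT.
Qed.

Lemma joins'_end e w : joins s' t' e x1 w -> w != x1 -> ~~ incident src tgt e x0 ->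
  exists a, joins src tgt e a w /\ a \in [:: x1; x2].
Proof.
rewrite /joins /incident /bc_src /bc_tgt =>
  /orP [/andP [/eqP H1 /eqP H2] | /andP[/eqP H1 /eqP H2]] hw /norP [hs ht].
- exists (src e); rewrite (bm_eq H2 hw) !eqxx; split => //.
  move: H1; rewrite /bc_map; case: ifP => [/orP [/eqP h| /eqP h] _|_ ->].
  + by rewrite h eqxx in hs.
  + by rewrite h !inE eqxx orbT.
  + by rewrite !inE eqxx.
- exists (tgt e); rewrite (bm_eq H1 hw) !eqxx orbT; split => //.
  move: H2; rewrite /bc_map; case: ifP => [/orP [/eqP h| /eqP h] _|_ ->].
  + by rewrite h eqxx in ht.
  + by rewrite h !inE eqxx orbT.
  + by rewrite !inE eqxx.
Qed.

Lemma pth'_G p l q : pth s' t' p l q -> p != x1 -> x1 \notin map snd l -> pth src tgt p l q.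
Proof.
elim: l p => [|r l IH] p //=.
case/andP => hj hp hp1; rewrite inE negb_or => /andP [hr hn].
rewrite eq_sym in hr.
by rewrite (joins'_G hj hp1 hr) /= IH.
Qed.

Lemma pth'_x2 p l q : pth s' t' p l q -> x2 \notin map snd l.
Proof.
elim: l p => [|r l IH] p //=.
case/andP => hj hp. rewrite inE negb_or (IH _ hp) andbT.
move: hj; rewrite /joins /bc_src /bc_tgt => /orP [/andP [_ /eqP <-]|/andP[/eqP <- _]];
  by rewrite eq_sym bm_x2.
Qed.

Definition D (Q : {set E}) (a b : V) (lG : seq (E * V)) (mid : seq V) : Prop :=
 [/\ a \in [:: x1; x2], b \in [:: x1; x2], a != b & pth src tgt a lG b] /\
 [/\ map snd lG = rcons mid b, uniq mid, x1 \notin mid & x2 \notin mid] /\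
 [/\ uniq (map fst lG), Q = [set e in map fst lG], {subset map fst lG <= A'} & 2 <= size lG] /\
 (x1 \in cverts s' t' Q /\ {subset mid <= cverts s' t' Q}).

Lemma notin12 c (m : seq V) : c \in [:: x1; x2] -> x1 \notin m -> x2 \notin m -> c \notin m.
Proof. by rewrite !inE => /orP [/eqP ->|/eqP ->]. Qed.

Lemma A'_inc e : e \in A' -> ~~ incident src tgt e x0.
Proof. by rewrite inE => /andP []. Qed.

Lemma data_rot Q l : pth s' t' x1 l x1 -> 2 <= size l -> uniq (map snd l) ->
  uniq (map fst l) -> {subset map fst l <= A'} -> Q = [set e in map fst l] ->
  ~ is_cycle src tgt [set: E] Q -> exists a b lG mid, D Q a b lG mid.
Proof.
case: l => [|[f w1] l] //= /andP [hf hp] hs.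
case/lastP: l hp hs => [|l2 [g z]] hp hs //.
move=> hu hue hA hQ hn.
rewrite -cats1 pth_cat /= in hp.
case/andP: hp => hp2 /andP [hg /eqP hz]; subst z.
set m := last w1 (map snd l2) in hp2 hg.
have : uniq (rcons (w1 :: map snd l2) x1) by rewrite rcons_cons /=; move: hu; rewrite map_rcons.
rewrite rcons_uniq => /andP [hx1 hum].
have hx2 : x2 \notin w1 :: map snd l2.
  by have := @pth'_x2 x1 ((f, w1) :: l2) m; rewrite /= hf hp2 => /(_ isT).
have hmx : m \in w1 :: map snd l2 by apply: mem_last.
have hw1 : w1 != x1 by apply: contraNneq hx1 => ->; rewrite mem_head.
have hm1 : m != x1 by apply: contraNneq hx1 => <-.
have hx1' : x1 \notin map snd l2 by apply: contra hx1 => h; rewrite inE h orbT.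
have hpG : pth src tgt w1 l2 m := pth'_G hp2 hw1 hx1'.
have hfA : f \in A' by apply: hA; rewrite mem_head.
have hgA : g \in A' by apply: hA; rewrite map_rcons inE mem_rcons mem_head orbT.
have [a [hja ha]] := joins'_end hf hw1 (A'_inc hfA).
have [b [hjb hb]] : exists b, joins src tgt g b m /\ b \in [:: x1; x2].
  by apply: joins'_end; [rewrite joinsC | | exact: A'_inc].
set lG := (f, w1) :: rcons l2 (g, b).
have hpG' : pth src tgt a lG b.
  by rewrite /= hja -cats1 pth_cat (pth_last hpG) hpG /= joinsC hjb eqxx.
have hsnd : map snd lG = rcons (w1 :: map snd l2) b by rewrite /= map_rcons.
have hfst : map fst lG = f :: map fst (rcons l2 (g, x1)) by rewrite /= !map_rcons.
have hbm : b \notin w1 :: map snd l2 by apply: notin12.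
have hsz : 2 <= size lG by rewrite /= size_rcons.
have hab : a != b.
  apply/negP => /eqP hab; apply: hn.
  apply: (@pth_cycle _ _ _ _ _ _ a lG) => //.
  - by rewrite {2}hab.
  - by rewrite hsnd rcons_uniq hbm.
  - by rewrite hfst /=.
  - by move=> ? _; rewrite inE.
  - by rewrite hfst.
exists a, b, lG, (w1 :: map snd l2).
split; [by [] | split; [by [] | split]].
- rewrite hfst; split => //= e; rewrite -hfst => he; apply: hA; rewrite -hfst.
- split.
  + apply: (@cverts_of _ _ _ _ _ f); first by rewrite hQ inE mem_head.
    exact: joins_inc_l hf.
  + move=> v hv.
    have := @pth_inc _ _ s' t' x1 ((f, w1) :: l2) m v; rewrite /= hf hp2 => /(_ isT hv) [e he hi].
    apply: (cverts_of _ hi); rewrite hQ inE map_rcons -rcons_cons mem_rcons inE he orbT //=.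
Qed.

Lemma data Q : is_cycle s' t' A' Q -> ~ is_cycle src tgt [set: E] Q ->
  exists a b lG mid, D Q a b lG mid.
Proof.
move=> /cycle_pth [u [l [[hp hs hu hue] [hA hQ]]]] hn.
have hul := pth_cyc_mem hp (ltnW hs).
have [hx1|hx1] := boolP (x1 \in map snd l); last first.
  exfalso; apply: hn; apply: (@pth_cycle _ _ _ _ _ _ u l) => //; last first.
    by move=> ? _; rewrite inE.
  apply: pth'_G => //; apply/eqP => hux; by rewrite -hux hul in hx1.
have [l1 [l2 [hl hlast]]] := pth_split u hx1.
have hperm : perm_eq (l2 ++ l1) l by rewrite hl perm_catC.
apply: (@data_rot _ (l2 ++ l1)).
- move: hp; rewrite {1}hl pth_cat hlast => /andP [h1 h2].
  by rewrite pth_cat (pth_last h2) h2.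
- by rewrite (perm_size hperm).
- by rewrite (perm_uniq (perm_map _ hperm)).
- by rewrite (perm_uniq (perm_map _ hperm)).
- by move=> e; rewrite (perm_mem (perm_map _ hperm)); apply: hA.
- by rewrite hQ; apply/setP => e; rewrite !inE (perm_mem (perm_map _ hperm)).
- exact: hn.
Qed.

Lemma D_rev Q a b lG mid : D Q a b lG mid -> exists lR, D Q b a lR (rev mid).
Proof.
case=> [[ha hb hab hp] [[hsn hum hm1 hm2] [[hue hQ hA hs] [hx1 hmid]]]].
have [lR [hpR hf hsR]] := pth_rev hp.
exists lR; split; [|split; [|split]].
- by split => //; rewrite eq_sym.
- split; rewrite ?rev_uniq ?mem_rev //.
  by move: hsR; rewrite hsn rev_cons rev_rcons rcons_cons => [[]].
- split.
  + by rewrite hf rev_uniq.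
  + by rewrite hQ; apply/setP => e; rewrite !inE hf mem_rev.
  + by move=> e; rewrite hf mem_rev; apply: hA.
  + by rewrite -(size_map fst) hf size_rev size_map.
- by split => // v; rewrite mem_rev; apply: hmid.
Qed.

Lemma two a b c : a \in [:: x1; x2] -> b \in [:: x1; x2] -> a != b ->
  c \in [:: x1; x2] -> c = a \/ c = b.
Proof.
rewrite !inE => /orP [/eqP->|/eqP->] /orP [/eqP->|/eqP->]; rewrite ?eqxx // => _
  /orP [/eqP->|/eqP->]; auto.
Qed.

End Bic.

Theorem lemma5p1 (V E : finType) (src tgt : E -> V)
  (loopless : forall e, src e != tgt e)
  (x0 x1 x2 : V)
  (deg2 : degree src tgt x0 = 2)
  (x12 : x1 != x2)
  (adj1 : exists e, joins src tgt e x0 x1)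
  (adj2 : exists e, joins src tgt e x0 x2)
  (Q Q' : {set E}) :
  osculating_bicycle (bc_src src x0 x1 x2) (bc_tgt tgt x0 x1 x2)
    (bc_edges src tgt x0 x1 x2) Q Q' ->
  ~ is_cycle src tgt [set: E] Q ->
  ~ is_cycle src tgt [set: E] Q' ->
  isolating_cycle src tgt x0 (Q :|: Q') /\ ~~ odd #|Q :|: Q'|.
Proof.
move=> [hQ hQ' hcard hpar] hnQ hnQ'.
have [a [b [lG [mid hD]]]] := data x12 hQ hnQ.
have [a' [b' [lG' [mid' hD']]]] := data x12 hQ' hnQ'.
have [lH [midH hDH]] : exists lH midH, D src tgt x0 x1 x2 Q' b a lH midH.
  case: (hD') => [[ha' hb' hab' _] _].
  case: (hD) => [[ha hb hab _] _].
  case: (two ha hb hab ha') => ea'.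
  - case: (two ha hb hab hb') => eb'.
      by rewrite ea' eb' eqxx in hab'.
    have [lR hR] := D_rev hD'.
    by exists lR, (rev mid'); rewrite -ea' -eb'.
  - case: (two ha hb hab hb') => eb'; last first.
      by rewrite ea' eb' eqxx in hab'.
    by exists lG', mid'; rewrite -ea' -eb'.
clear hD'.
case: hD => [[ha hb hab hp] [[hsn hum hm1 hm2] [[hue hQe hA hs] [hx1 hmid]]]].
case: hDH => [[hb' ha' hba hp'] [[hsn' hum' hm1' hm2'] [[hue' hQe' hA' hs'] [hx1' hmid']]]].
set L := lG ++ lH.
have hpL : pth src tgt a L a by rewrite pth_cat (pth_last hp) hp hp'.
set s' := bc_src src x0 x1 x2.
set t' := bc_tgt tgt x0 x1 x2.
have hI : forall v, v \in cverts s' t' Q -> v \in cverts s' t' Q' -> v = x1.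
  move=> v h1 h2.
  have : #|cverts s' t' Q :&: cverts s' t' Q'| == 1 by rewrite hcard.
  case/cards1P => z hz.
  have : v \in [set z] by rewrite -hz inE h1 h2.
  have : x1 \in [set z] by rewrite -hz inE hx1 hx1'.
  by rewrite !inE => /eqP -> /eqP ->.
have hdisjE : forall e, e \in map fst lG -> e \in map fst lH -> False.
  move=> e h1 h2.
  have eQ : e \in Q by rewrite hQe inE.
  have eQ' : e \in Q' by rewrite hQe' inE.
  have := hA _ h1; rewrite inE => /andP [_ hne].
  have hinc1 : incident s' t' e (s' e) by rewrite /incident eqxx.
  have hinc2 : incident s' t' e (t' e) by rewrite /incident eqxx orbT.
  have e1 := hI _ (cverts_of eQ hinc1) (cverts_of eQ' hinc1).
  have e2 := hI _ (cverts_of eQ hinc2) (cverts_of eQ' hinc2).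
  by move: hne; rewrite -/s' -/t' e1 e2 eqxx.
have hdisjV : forall v, v \in mid -> v \in midH -> False.
  move=> v h1 h2.
  have ev := hI v (hmid v h1) (hmid' v h2).
  by rewrite -ev h1 in hm1.
have hbm : b \notin mid := notin12 hb hm1 hm2.
have ham : a \notin midH := notin12 ha hm1' hm2'.
have hbm' : b \notin midH := notin12 hb hm1' hm2'.
have huL : uniq (map fst L).
  rewrite map_cat cat_uniq hue hue' andbT /=.
  by apply/hasPn => e h2; apply/negP => h1; apply: (hdisjE e h1 h2).
have hQU : Q :|: Q' = [set e in map fst L].
  by rewrite hQe hQe'; apply/setP => e; rewrite !inE map_cat mem_cat.
have hcyc : is_cycle src tgt (del_vertex_edges src tgt x0) (Q :|: Q').
  apply: (@pth_cycle _ _ _ _ _ _ a L) => //.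
  - by rewrite size_cat (leq_trans hs) // leq_addr.
  - rewrite map_cat hsn hsn' cat_uniq !rcons_uniq hbm hum ham hum' /= andbT.
    apply/hasPn => v; rewrite mem_rcons inE => /orP [/eqP ->|h].
      by rewrite mem_rcons inE negb_or hab (notin12 ha hm1 hm2).
    rewrite mem_rcons inE negb_or; apply/andP; split.
      by apply: contraNneq hbm' => <-.
    by apply/negP => h1; apply: (hdisjV v h1 h).
  - move=> e; rewrite map_cat mem_cat => /orP [h|h].
      by have := hA _ h; rewrite !inE => /andP [].
    by have := hA' _ h; rewrite !inE => /andP [].
have two' := two ha hb hab.
have hc12 : forall c, c \in [:: x1; x2] -> c \in cverts src tgt (Q :|: Q').
  move=> c hc.
  have : c \in map snd L.
    by case: (two' c hc) => ->; rewrite map_cat mem_cat hsn hsn' !mem_rcons !inE eqxx ?orbT.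
  move=> /(pth_inc hpL) [e he hi].
  by apply: (cverts_of _ hi); rewrite hQU inE.
have hx0 : forall e, incident src tgt e x0 ->
    (src e == x0 -> tgt e \in [:: x1; x2]) /\ (tgt e == x0 -> src e \in [:: x1; x2]).
  case: adj1 => e1 he1; case: adj2 => e2 he2.
  have h12 : e1 != e2.
    apply/eqP => E12; subst e2.
    move: he1 he2; rewrite /joins =>
      /orP [/andP [/eqP s1 /eqP t1]|/andP[/eqP s1 /eqP t1]]
      /orP [/andP [/eqP s2 /eqP t2]|/andP[/eqP s2 /eqP t2]].
    + by rewrite -t1 -t2 eqxx in x12.
    + by have := loopless e1; rewrite s1 t2 eqxx.
    + by have := loopless e1; rewrite s2 t1 eqxx.
    + by rewrite -s1 -s2 eqxx in x12.
  have hS : [set e | incident src tgt e x0] = [set e1; e2].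
    apply/eqP; rewrite eq_sym eqEcard; apply/andP; split.
      apply/subsetP => e; rewrite !inE => /orP [/eqP -> | /eqP ->].
        exact: joins_inc_l he1.
      exact: joins_inc_l he2.
    by rewrite cards2 h12; move: deg2; rewrite /degree => ->.
  move=> e hinc.
  have : e \in [set e1; e2] by rewrite -hS inE.
  rewrite !inE => /orP [/eqP -> | /eqP ->]; split => /eqP h.
  - by rewrite ((joins_other loopless he1).1 h) eqxx.
  - by rewrite ((joins_other loopless he1).2 h) eqxx.
  - by rewrite ((joins_other loopless he2).1 h) eqxx orbT.
  - by rewrite ((joins_other loopless he2).2 h) eqxx orbT.
split.
  split => // e; split => h.
  - have hi : incident src tgt e x0 by rewrite /incident h.
    exact: hc12 ((hx0 e hi).1 h).
  - have hi : incident src tgt e x0 by rewrite /incident h orbT.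
    exact: hc12 ((hx0 e hi).2 h).
rewrite hQU card_set_uniq // map_cat size_cat oddD.
have -> : size (map fst lG) = #|Q| by rewrite hQe card_set_uniq.
have -> : size (map fst lH) = #|Q'| by rewrite hQe' card_set_uniq.
by rewrite hpar addbb.
Qed.
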